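(* Let $n\ge 1$, let $d>1$ be a divisor of $n$, and let $\mathcal{S}$ be a primitive Schur ring over the cyclic group $\mathbb{Z}_d$, regarded as the unique subgroup of order $d$ of $\mathbb{Z}_n$. Then the number $\Omega(n,\mathcal{S})$ of Schur rings over $\mathbb{Z}_n$ whose wedge-core is $\mathcal{S}$ equals $\Omega(n/d)$, the number of Schur rings over $\mathbb{Z}_{n/d}$.
   Context: $\mathbb{Z}_n=\langle z\rangle$ denotes the cyclic group of order $n$ written multiplicatively. A subset $C\subseteq G$ is identified with $\sum_{g\in C}g\in\mathbb{Q}[G]$, and $C^*=\{x^{-1}:x\in C\}$. A Schur ring over a finite group $G$ is the $\mathbb{Q}$-span of the elements $C_1,\dots,C_r$ of a partition $\{C_1,\dots,C_r\}$ of $G$ such that $C_1=\{1\}$, each $C_i^*$ is some $C_j$, and each product $C_iC_j$ is a nonnegative-integer combination of the $C_k$; the $C_i$ are the primitive sets (classes) of the Schur ring. $\Omega(n)$ denotes the number of Schur rings over $\mathbb{Z}_n$. For a Schur ring $\mathcal{S}$ over $G$, an $\mathcal{S}$-subgroup is a subgroup of $G$ that is a union of classes of $\mathcal{S}$; $\mathcal{S}$ is primitive if its only $\mathcal{S}$-subgroups are $1$ and $G$. For an $\mathcal{S}$-subgroup $H$, $\mathcal{S}_H$ is the Schur ring over $H$ spanned by the classes of $\mathcal{S}$ contained in $H$. An $\mathcal{S}$-section is a pair $[K,H]$ of $\mathcal{S}$-subgroups with $1\le K\le H\le G$, $K$ normal in $G$; it is proper if $1<K\le H<G$. $\mathcal{S}$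 is wedge-decomposable if there is a proper $\mathcal{S}$-section $[K,H]$ such that every class of $\mathcal{S}$ is either contained in $H$ or is a union of cosets of $K$; otherwise it is wedge-indecomposable. Let $\omega:\mathbb{Q}[\mathbb{Z}_n]\to\mathbb{Q}(\zeta_n)$ be the algebra map determined by $z\mapsto\zeta_n$, a primitive complex $n$th root of unity. The wedge-core of a Schur ring $\mathcal{S}$ over $\mathbb{Z}_n$ is the Schur subring $\mathcal{S}_H$, where $H$ is the largest $\mathcal{S}$-subgroup such that $\mathcal{S}_H$ is wedge-indecomposable and $\omega(\mathcal{S}_H)=\omega(\mathcal{S})$. $\Omega(n,\mathcal{S})$ denotes the number of Schur rings over $\mathbb{Z}_n$ whose wedge-core is $\mathcal{S}$. *)

(* Defs.v *)
(* Z_n (written multiplicatively in the paper, z^k) is modelled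
   additively by 'I_n = {0,...,n-1} with addition (x + y) mod n; z^k <-> k. *)
From mathcomp Require Import all_boot all_order all_algebra all_field.
From Stdlib Require Import ClassicalEpsilon.
Set Implicit Arguments. Unset Strict Implicit. Unset Printing Implicit Defensive.
Import GRing.Theory Num.Theory.

Definition pb (P : Prop) : bool :=
  if excluded_middle_informative P then true else false.

Section ZnDefs.
Variable n : nat.
Local Notation Z := ('I_n).

Definition one_set : {set Z} := [set x : Z | val x == 0%N].

Definition inv_set (C : {set Z}) : {set Z} :=
  [set x : Z | [exists y in C, val x == (n - val y) %% n]].

(* coefficient of g in the group-ring product C*D *)
Definition coef (C D : {set Z}) (g : Z) : nat :=
  #|[set p : Z * Z | [&& p.1 \in C, p.2 \in D & val g == (val p.1 + val p.2) %% n]]|.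

(* P (the set of classes) defines a Schur ring over the subgroup H of Z_n:
   partition of H, {1} is a class, closed under *, and every product C_i C_j
   is a nonnegative-integer combination of classes, i.e. its coefficients
   vanish outside H and are constant on each class. *)
Definition is_schur (H : {set Z}) (P : {set {set Z}}) : Prop :=
  [/\ partition P H,
      one_set \in P,
      (forall C, C \in P -> inv_set C \in P),
      (forall C D g, C \in P -> D \in P -> g \notin H -> coef C D g = 0%N) &
      (forall C D E g h, C \in P -> D \in P -> E \in P -> g \in E -> h \in E ->
         coef C D g = coef C D h)].

Definition is_subgroup (H : {set Z}) : Prop :=
  [/\ one_set \subset H,
      (forall x y z : Z, x \in H -> y \in H -> val z = (val x + val y) %% n -> z \in H) &
      (forall x z : Z, x \in H -> val z = (n - val x) %% n -> z \in H)].

Definition s_subgroup (P : {set {set Z}}) (H : {set Z}) : Prop :=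
  is_subgroup H /\ H = \bigcup_(C in P | C \subset H) C.

Definition restr (P : {set {set Z}}) (H : {set Z}) : {set {set Z}} :=
  [set C in P | C \subset H].

Definition primitive (G : {set Z}) (P : {set {set Z}}) : Prop :=
  forall H, s_subgroup P H -> H = one_set \/ H = G.

Definition union_cosets (K C : {set Z}) : Prop :=
  forall x y z : Z, x \in C -> y \in K -> val z = (val x + val y) %% n -> z \in C.

(* wedge-decomposability of a Schur ring P over G (Z_n abelian: all normal) *)
Definition wedge_dec (G : {set Z}) (P : {set {set Z}}) : Prop :=
  exists K L : {set Z},
    [/\ s_subgroup P K, s_subgroup P L, K != one_set, K \subset L & L != G] /\
        (forall C, C \in P -> C \subset L \/ union_cosets K C).

Definition zeta : algC :=
  let: exist z _ := C_prim_root_exists (ltn0Sn n.-1) in z.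

Definition omega (C : {set Z}) : algC := (\sum_(x in C) zeta ^+ val x)%R.

Definition in_omega_span (x : algC) (Q : {set {set Z}}) : Prop :=
  exists c : {ffun {set Z} -> rat}, x = (\sum_(D in Q) ratr (c D) * omega D)%R.

(* omega(span P) = omega(span Q) *)
Definition omega_eq (P Q : {set {set Z}}) : Prop :=
  (forall C, C \in P -> in_omega_span (omega C) Q) /\
  (forall C, C \in Q -> in_omega_span (omega C) P).

Definition core_cand (P : {set {set Z}}) (H : {set Z}) : Prop :=
  [/\ s_subgroup P H, ~ wedge_dec H (restr P H) & omega_eq (restr P H) P].

(* H is the largest S-subgroup with S_H wedge-indecomposable and
   omega(S_H) = omega(S); the wedge-core is then restr P H *)
Definition wedge_core_grp (P : {set {set Z}}) (H : {set Z}) : Prop :=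
  core_cand P H /\ forall H', core_cand P H' -> H' \subset H.

End ZnDefs.

Definition Omega (n : nat) : nat :=
  #|[set P : {set {set 'I_n}} | pb (is_schur [set: 'I_n] P)]|.

Definition embset (n d : nat) (C : {set 'I_d}) : {set 'I_n} :=
  [set x : 'I_n | [exists k : 'I_d, (k \in C) && (val x == val k * (n %/ d))%N]].

Definition embed (n d : nat) (S : {set {set 'I_d}}) : {set {set 'I_n}} :=
  [set embset n C | C in S].

Definition Omega_core (n d : nat) (S : {set {set 'I_d}}) : nat :=
  #|[set P : {set {set 'I_n}} | pb (is_schur [set: 'I_n] P /\
      exists H, wedge_core_grp P H /\ restr P H = embed n S)]|.

(* Main.v *)
Require Import Defs.
From mathcomp Require Import all_boot all_order all_algebra all_field.
From Stdlib Require Import ClassicalEpsilon Classical.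
Set Implicit Arguments. Unset Strict Implicit. Unset Printing Implicit Defensive.
Import GRing.Theory Num.Theory.

Lemma pbP (P : Prop) : reflect P (pb P).
Proof. by rewrite /pb; case: excluded_middle_informative => h; constructor. Qed.


Section Part.
Variable T : finType.
Implicit Types (P : {set {set T}}) (B C X : {set T}).

Lemma partitionP P :
  reflect [/\ set0 \notin P, (forall x, exists2 B, B \in P & x \in B) &
             (forall B C x, B \in P -> C \in P -> x \in B -> x \in C -> B = C)]
          (partition P setT).
Proof.
apply: (iffP and3P) => [[/eqP cov /trivIsetP tri n0]|[n0 ex un]].
  split=> // [x|B C x BP CP xB xC].
    have : x \in cover P by rewrite cov inE.
    by case/bigcupP => B BP xB; exists B.
  case: (eqVneq B C) => // neq.
  by rewrite (disjointFr (tri B C BP CP neq) xB) in xC.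
split=> //.
  rewrite eqEsubset subsetT /=; apply/subsetP => x _.
  by case: (ex x) => B BP xB; apply/bigcupP; exists B.
apply/trivIsetP => B C BP CP neq; rewrite disjoints_subset.
apply/subsetP => x xB; rewrite inE; apply/negP => xC.
by move/eqP: neq; apply; apply: un xB xC.
Qed.

Lemma block_sub P X B x : partition P setT ->
  X = \bigcup_(C in P | C \subset X) C -> B \in P -> x \in B -> x \in X -> B \subset X.
Proof.
move=> /partitionP[_ _ un] eX BP xB; rewrite {1}eX => /bigcupP[C /andP[CP CX] xC].
by rewrite (un B C x).
Qed.

Lemma block_n0 P B : partition P setT -> B \in P -> exists x, x \in B.
Proof.
move=> /partitionP[n0 _ _] BP; case: (set_0Vmem B) => [B0|[x xB]]; last by exists x.
by rewrite -B0 BP in n0.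
Qed.

End Part.

Section Gen.
Variable p : nat.
Local Notation N := p.+1.
Local Notation Z := 'I_N.
Implicit Types (x y z : Z) (C D E H K : {set Z}) (P : {set {set Z}}).

Lemma addE x y : val (x + y)%R = (val x + val y) %% N. Proof. by []. Qed.
Lemma oppE x : val (- x)%R = (N - val x) %% N. Proof. by []. Qed.

Lemma eq_addE x y z : (val z == (val x + val y) %% N) = (z == x + y)%R.
Proof. by rewrite -addE. Qed.

Lemma one_setE : one_set N = [set 0%R].
Proof. by apply/setP=> x; rewrite !inE; apply/eqP/eqP => [h|->//]; apply: val_inj. Qed.

Lemma inv_setE C : inv_set C = [set x | (- x)%R \in C].
Proof.
apply/setP=> x; rewrite !inE; apply/existsP/idP => [[y /andP[yC /eqP e]]|xC].
  have -> : (- x)%R = y; last by [].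
  apply/eqP; rewrite -(subr_eq0 _ y) -opprD oppr_eq0; apply/eqP/val_inj.
  rewrite addE e /= modnDml subnK ?modnn //; exact: ltnW (ltn_ord y).
by exists (- x)%R; rewrite xC /=; apply/eqP; rewrite -[RHS]/(val (- - x)%R) opprK.
Qed.

Lemma coefE C D g : coef C D g = #|[set x | (x \in C) && ((g - x)%R \in D)]|.
Proof.
rewrite /coef -(card_imset _ (f := fun x => (x, g - x)%R)); last by move=> x y [].
apply: eq_card => -[x y]; rewrite in_set /= eq_addE.
apply/and3P/imsetP => [[xC yD /eqP e]|[z]].
  exists x; first by rewrite inE xC e (addrC x) addrK.
  by rewrite e (addrC x) addrK.
rewrite inE => /andP[zC zD] [-> ->]; split=> //.
by rewrite addrC subrK.
Qed.

Lemma coefC C D g : coef C D g = coef D C g.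
Proof.
rewrite !coefE -(card_imset _ (f := fun x => (g - x)%R)); last first.
  by move=> x y /= /eqP; rewrite (inj_eq (addrI g)) (inj_eq oppr_inj) => /eqP.
apply: eq_card => x; rewrite in_set; apply/imsetP/andP => [[y]|[xD gx]].
  by rewrite inE => /andP[yC yD] ->; rewrite yD opprB addrC subrK.
exists (g - x)%R; last by rewrite opprB addrC subrK.
by rewrite inE gx opprB addrC subrK xD.
Qed.


Lemma is_subgroupP H : is_subgroup H <->
  [/\ 0%R \in H, (forall x y, x \in H -> y \in H -> (x + y)%R \in H) &
      (forall x, x \in H -> (- x)%R \in H)].
Proof.
split=> [[h1 h2 h3]|[h1 h2 h3]].
  split=> [|x y xH yH|x xH].
  - by apply: (subsetP h1); rewrite one_setE inE.
  - by apply: (h2 x y) => //; rewrite addE.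
  - by apply: (h3 x).
split=> [|x y z xH yH e|x z xH e].
- by rewrite one_setE sub1set.
- have -> : z = (x + y)%R by apply: val_inj; rewrite e.
  exact: h2.
- have -> : z = (- x)%R by apply: val_inj; rewrite e.
  exact: h3.
Qed.

Lemma union_cosetsP K C : union_cosets K C <->
  (forall x y, x \in C -> y \in K -> (x + y)%R \in C).
Proof.
split=> [h x y xC yK|h x y z xC yK e]; first by apply: (h x y) => //; rewrite addE.
have -> : z = (x + y)%R by apply: val_inj; rewrite e.
exact: h.
Qed.

Lemma zeta_prim : (N.-primitive_root (zeta N))%R.
Proof. by rewrite /zeta; case: C_prim_root_exists. Qed.

Lemma omega_shift C k : (forall x, x \in C -> (x + k)%R \in C) -> k != 0%R ->
  omega C = 0%R.
Proof.
move=> hC k0; set f := fun x : Z => (x + k)%R.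
have finj : injective f by move=> x y; apply: addIr.
have fC : f @: C = C.
  apply/eqP; rewrite eqEcard card_imset // leqnn andbT.
  by apply/subsetP => y /imsetP[x xC ->]; apply: hC.
have e : omega C = (zeta N ^+ val k * omega C)%R.
  rewrite /omega -{1}fC big_imset /=; last by move=> x y _ _; apply: finj.
  rewrite mulr_sumr; apply: eq_bigr => x _.
  by rewrite /f /= (prim_expr_mod zeta_prim) -exprD addnC.
have : ((1 - zeta N ^+ val k) * omega C)%R = 0%R by rewrite mulrBl mul1r -e subrr.
move/eqP; rewrite mulf_eq0 => /orP[|/eqP //].
rewrite subr_eq0 eq_sym -(prim_order_dvd zeta_prim) => /dvdn_leq.
have kpos : (0 < val k)%N by rewrite lt0n; apply: contra k0 => /eqP h; apply/eqP/val_inj.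
by move=> /(_ kpos); rewrite leqNgt ltn_ord.
Qed.

End Gen.

Section Hard.
Variable p : nat.
Local Notation N := p.+1.
Local Notation Z := 'I_N.
Implicit Types (x y z : Z) (C D E H K L M X : {set Z}) (P Q : {set {set Z}}).

Definition ucl P X := forall x C, x \in X -> C \in P -> x \in C -> C \subset X.

Lemma in_span_self C Q : C \in Q -> in_omega_span (omega C) Q.
Proof.
move=> CQ; exists [ffun D => ((D == C)%:R)%R]; rewrite (bigD1 C) //= ffunE eqxx.
rewrite big1 ?addr0 ?rmorph1 ?mul1r // => D /andP[_ /negbTE DC].
by rewrite ffunE DC rmorph0 mul0r.
Qed.

Lemma in_span_0 Q : in_omega_span 0%R Q.
Proof. by exists [ffun D => 0%R]; rewrite big1 // => D _; rewrite ffunE rmorph0 mul0r. Qed.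

Lemma omega_union_cosets K C : is_subgroup K -> K != one_set N ->
  union_cosets K C -> omega C = 0%R.
Proof.
move=> /is_subgroupP[K0 _ _] K1 /union_cosetsP uc.
have [k kK k0] : exists2 k, k \in K & k != 0%R.
  apply/exists_inP; apply: contraR K1; rewrite negb_exists_in => /forall_inP h.
  rewrite one_setE eqEsubset sub1set K0 andbT; apply/subsetP => x xK.
  by rewrite inE; have := h x xK; rewrite negbK.
by apply: (omega_shift (k := k)) => // x xC; apply: uc.
Qed.

Section P.
Variable P : {set {set Z}}.
Hypothesis partP : partition P setT.

Lemma class_of x : exists2 C, C \in P & x \in C.
Proof. by case/partitionP: partP => _ h _; apply: h. Qed.

Lemma class_uniq C D x : C \in P -> D \in P -> x \in C -> x \in D -> C = D.
Proof. by case/partitionP: partP => _ _ h; apply: h. Qed.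

Lemma ssubP X : s_subgroup P X <-> is_subgroup X /\ ucl P X.
Proof.
split=> [[sg eX]|[sg uc]]; split=> //.
  by move=> x C xX CP xC; apply: (block_sub partP eX CP xC xX).
apply/setP => x; apply/idP/bigcupP => [xX|[C /andP[CP CX] xC]].
  by case: (class_of x) => C CP xC; exists C => //; rewrite CP (uc x C).
exact: (subsetP CX).
Qed.

Lemma ssub_restrP L K : s_subgroup (restr P L) K <->
  [/\ is_subgroup K, ucl P K & K \subset L].
Proof.
split=> [[sg eK]|[sg uc KL]].
  have KL : K \subset L.
    rewrite eK; apply/bigcupsP => C; rewrite inE => /andP[/andP[_ CL] _] //.
  split=> // x C xK CP xC.
  move: xK; rewrite {1}eK => /bigcupP[D]; rewrite inE => /andP[/andP[DP _] DK] xD.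
  by rewrite (class_uniq CP DP xC xD).
split=> //; apply/setP => x; apply/idP/bigcupP => [xK|[C /andP[CP CX] xC]].
  case: (class_of x) => C CP xC; exists C => //.
  by rewrite inE CP /= (uc x C) // (subset_trans (uc x C xK CP xC) KL).
exact: (subsetP CX).
Qed.

Lemma restr_sub L C : C \in restr P L -> C \in P /\ C \subset L.
Proof. by rewrite inE => /andP. Qed.

Lemma omega_restr L M : omega_eq (restr P L) P -> M \subset L ->
  (forall C, C \in restr P L -> ~~ (C \subset M) -> omega C = 0%R) ->
  omega_eq (restr P M) P.
Proof.
move=> [_ h2] ML h0; split=> [C|C CP].
  by rewrite inE => /andP[CP _]; apply: in_span_self.
case: (h2 C CP) => c ->; exists c.
rewrite (big_setID (restr P M)) /= [X in (_ + X)%R]big1 ?addr0.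
  apply: eq_bigl => D; rewrite !inE; apply/andP/andP => [[/andP[DP DL] /andP[_ DM]]|[DP DM]].
    by [].
  by split; rewrite ?DP ?(subset_trans DM ML) ?DM.
move=> D; rewrite !inE => /andP[/negP nDM /andP[DP DL]].
rewrite h0 ?mulr0 //; first by rewrite inE DP.
by apply/negP => DM; apply: nDM; rewrite DP DM.
Qed.


Section Claim.
Variable H : {set Z}.
Hypothesis sH : s_subgroup P H.
Hypothesis H1 : H != one_set N.
Hypothesis primH : forall X, is_subgroup X -> X \subset H -> ucl P X ->
  X = one_set N \/ X = H.

Lemma subgI K L : is_subgroup K -> is_subgroup L -> is_subgroup (K :&: L).
Proof.
move=> /is_subgroupP[a1 a2 a3] /is_subgroupP[b1 b2 b3]; apply/is_subgroupP.
split=> [|x y|x]; rewrite !inE ?a1 ?b1 // => /andP[xK xL].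
  by move=> /andP[yK yL]; rewrite a2 ?b2.
by rewrite a3 ?b3.
Qed.

Lemma uclI K L : ucl P K -> ucl P L -> ucl P (K :&: L).
Proof.
move=> uK uL x C; rewrite inE => /andP[xK xL] CP xC.
by rewrite subsetI (uK x C) ?(uL x C).
Qed.

Lemma nonzero_of K : is_subgroup K -> K != one_set N -> exists2 k, k \in K & k != 0%R.
Proof.
move=> /is_subgroupP[K0 _ _] K1.
apply/exists_inP; apply: contraR K1; rewrite negb_exists_in => /forall_inP h.
rewrite one_setE eqEsubset sub1set K0 andbT; apply/subsetP => x xK.
by rewrite inE; have := h x xK; rewrite negbK.
Qed.

Lemma sub_one K : is_subgroup K -> K \subset one_set N -> K = one_set N.
Proof.
move=> /is_subgroupP[K0 _ _] K1; apply/eqP; rewrite eqEsubset K1 one_setE sub1set //.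
Qed.

Lemma sub_of_shift K C h : is_subgroup K -> h \in K ->
  (forall k, k \in C -> (h + k)%R \in K) -> C \subset K.
Proof.
move=> /is_subgroupP[_ a2 a3] hK hC; apply/subsetP => k kC.
have := a2 _ _ (a3 _ hK) (hC k kC); by rewrite addKr.
Qed.

Lemma claim n0 L : (#|L| <= n0)%N -> s_subgroup P L -> H \subset L -> H != L ->
  omega_eq (restr P L) P ->
  (exists H', core_cand P H' /\ ~~ (H' \subset H)) \/
  (forall C, C \in P -> C \subset L -> ~~ (C \subset H) -> union_cosets H C).
Proof.
elim: n0 L => [|n0 IH] L cardL sL HL nHL oL.
  have : H \proper L by rewrite properEneq nHL.
  by move/proper_card; rewrite ltnNge (leq_trans cardL).
have [w|nw] := classic (wedge_dec L (restr P L)); last first.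
  left; exists L; split; first by split.
  by apply: contra nHL => LH; rewrite eqEsubset HL.
case: w => K [M [[sK sM K1 KM nML] dec]].
move/ssub_restrP: sK => [gK uK KL].
move/ssub_restrP: sM => [gM uM ML].
have /ssubP[gH uH] := sH.
have /ssubP[gL uL] := sL.
have MltL : (#|M| <= n0)%N.
  have : M \proper L by rewrite properEneq ML nML.
  by move/proper_card => h; rewrite -ltnS (leq_trans h).
have sMP : s_subgroup P M by apply/ssubP.
have om0 : forall C, C \in restr P L -> ~~ (C \subset M) -> omega C = 0%R.
  move=> C CL CM; apply: (omega_union_cosets (K := K)) => //.
  by case: (dec C CL) => [CM'|//]; rewrite CM' in CM.
have oM := omega_restr oL ML om0.
have [X1|XH] := primH (subgI gH gK) (subsetIl _ _) (uclI uH uK); last first.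
- have HK : H \subset K by rewrite -XH subsetIr.
  have HM := subset_trans HK KM.
  have [eMH|nMH] := eqVneq H M.
    right=> C CP CL CH; have CLr : C \in restr P L by rewrite inE CP.
    case: (dec C CLr) => [CM|]; first by rewrite eMH CM in CH.
    move/union_cosetsP => h; apply/union_cosetsP => x y xC yH.
    by apply: h => //; apply: (subsetP HK).
  have [[H' [cH' nH']]|IHr] := IH M MltL sMP HM nMH oM; first by left; exists H'.
  right=> C CP CL CH; have [CM|nCM] := boolP (C \subset M); first exact: IHr.
  have CLr : C \in restr P L by rewrite inE CP.
  case: (dec C CLr) => [CM|]; first by rewrite CM in nCM.
  move/union_cosetsP => h; apply/union_cosetsP => x y xC yH.
  by apply: h => //; apply: (subsetP HK).
- have K1' : forall k, k \in K -> k \in H -> k = 0%R.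
    move=> k kK kH; have : k \in H :&: K by rewrite inE kH kK.
    by rewrite X1 one_setE inE => /eqP.
  have [k kK k0] := nonzero_of gK K1.
  have kH : k \notin H by apply: contra k0 => kH; rewrite (K1' k kK kH).
  have HM : H \subset M.
    have [Y1|YH] := primH (subgI gH gM) (subsetIl _ _) (uclI uH uM); last first.
      by rewrite -YH subsetIr.
    have [h hH h0] := nonzero_of gH H1.
    have hM : h \notin M.
      apply: contra h0 => hM; have : h \in H :&: M by rewrite inE hH hM.
      by rewrite Y1 one_setE inE.
    case: (class_of h) => C CP hC.
    have CH := uH h C hH CP hC.
    have CLr : C \in restr P L by rewrite inE CP (subset_trans CH HL).
    case: (dec C CLr) => [CM|/union_cosetsP uc]; first by rewrite (subsetP CM) in hM.
    have KH : K \subset H.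
      apply: (sub_of_shift (h := h)) => // k' k'K.
      exact: (subsetP CH) (uc h k' hC k'K).
    have K0 : K \subset one_set N.
      apply/subsetP => k' k'K; rewrite one_setE inE.
      by rewrite (K1' k' k'K (subsetP KH _ k'K)).
    by move: K1; rewrite (sub_one gK K0) eqxx.
  have nMH : H != M.
    apply: contra K1 => /eqP eHM; apply/eqP/sub_one => //.
    apply/subsetP => k' k'K; rewrite one_setE inE.
    by rewrite (K1' k' k'K) // eHM (subsetP KM).
  have [[H' [cH' nH']]|IHr] := IH M MltL sMP HM nMH oM; first by left; exists H'.
  exfalso; case: (class_of k) => C CP kC.
  have CK := uK k C kK CP kC.
  have CM := subset_trans CK KM.
  have CH : ~~ (C \subset H) by apply: contra kH => CH; rewrite (subsetP CH).
  have /union_cosetsP uc := IHr C CP CM CH.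
  have HK : H \subset K.
    apply: (sub_of_shift (h := k)) => // h' h'H.
    exact: (subsetP CK) (uc k h' kC h'H).
  have H0 : H \subset one_set N.
    apply/subsetP => h' h'H; rewrite one_setE inE.
    by rewrite (K1' h' (subsetP HK _ h'H) h'H).
  by move: H1; rewrite (sub_one gH H0) eqxx.
Qed.

Lemma hard_main : (forall H', core_cand P H' -> H' \subset H) ->
  forall C, C \in P -> ~~ (C \subset H) -> union_cosets H C.
Proof.
move=> mx C CP CH.
have [eHT|nHT] := eqVneq H setT; first by rewrite eHT subsetT in CH.
have sT : s_subgroup P setT.
  apply/ssubP; split=> [|x D _ _ _]; last exact: subsetT.
  by apply/is_subgroupP; split=> *; rewrite inE.
have rT : restr P setT = P by apply/setP => D; rewrite inE subsetT andbT.
have oT : omega_eq (restr P setT) P by rewrite rT; split=> D DP; apply: in_span_self.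
have [[H' [cH' nH']]|] := claim (leqnn _) sT (subsetT H) nHT oT.
  by rewrite mx in nH'.
by move=> h; apply: h => //; apply: subsetT.
Qed.

End Claim.
End P.
End Hard.

Section InvGen.
Variable p : nat.
Local Notation Z := 'I_p.+1.
Implicit Types (C : {set Z}) (P : {set {set Z}}).

Lemma inv_setK C : inv_set (inv_set C) = C.
Proof. by apply/setP => x; rewrite !inv_setE !inE opprK. Qed.

Lemma inv_one : inv_set (one_set p.+1) = one_set p.+1.
Proof. by apply/setP => x; rewrite inv_setE one_setE !inE oppr_eq0. Qed.

Lemma zero_block P C : is_schur setT P -> C \in P -> 0%R \in C -> C = one_set p.+1.
Proof.
case=> pP oP _ _ _ CP C0; apply: (class_uniq pP CP oP C0).
by rewrite one_setE inE.
Qed.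

Lemma same_block P B E a b : partition P setT -> B \in P -> E \in P ->
  a \in E -> b \in E -> (a \in B) = (b \in B).
Proof.
move=> pP BP EP aE bE; apply/idP/idP => h.
  by rewrite (class_uniq pP BP EP h aE).
by rewrite (class_uniq pP BP EP h bE).
Qed.


Lemma coef_one D g : coef (one_set p.+1) D g = (g \in D : nat).
Proof.
rewrite coefE one_setE; case h: (g \in D) => /=.
  rewrite -(cards1 (0%R : Z)); apply: eq_card => x; rewrite !inE.
  by case: eqP => // ->; rewrite subr0 h.
apply/eqP; rewrite cards_eq0; apply/eqP/setP => x; rewrite !inE.
by case: eqP => // ->; rewrite subr0 h.
Qed.

End InvGen.


Section Quot.
Variables n' m' d' : nat.
Hypothesis en : n'.+1 = (d'.+1 * m'.+1)%N.
Local Notation N := n'.+1.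
Local Notation M := m'.+1.
Local Notation Dd := d'.+1.
Local Notation ZN := 'I_N.
Local Notation ZM := 'I_M.
Local Notation ZD := 'I_Dd.

Definition q (x : ZN) : ZM := inZp (val x).
Definition e (k : ZD) : ZN := inZp (val k * M).

Lemma MdvdN : (M %| N)%N. Proof. by rewrite en dvdn_mull. Qed.

Lemma divNE : (N %/ Dd)%N = M. Proof. by rewrite en mulKn. Qed.

Lemma q_val x : nat_of_ord (q x) = (nat_of_ord x %% M)%N. Proof. by []. Qed.

Lemma q_add x y : q (x + y)%R = (q x + q y)%R.
Proof.
apply: ord_inj; rewrite /= (modn_dvdm _ MdvdN).
by rewrite modnDm.
Qed.

Lemma q0 : q 0%R = 0%R. Proof. by apply: ord_inj; rewrite /= mod0n. Qed.

Lemma q_opp x : q (- x)%R = (- q x)%R.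
Proof.
by apply/eqP; rewrite -subr_eq0 opprK -q_add addNr q0.
Qed.

Lemma q_sub x y : q (x - y)%R = (q x - q y)%R.
Proof. by rewrite q_add q_opp. Qed.

Lemma e_val k : nat_of_ord (e k) = (nat_of_ord k * M)%N.
Proof. by rewrite /= modn_small // en ltn_mul2r ltn_ord. Qed.

Lemma e_inj : injective e.
Proof. by move=> k l /(congr1 (@nat_of_ord _)); rewrite !e_val => /eqP; rewrite eqn_mul2r /= => /eqP/ord_inj. Qed.

Lemma e_add k l : e (k + l)%R = (e k + e l)%R.
Proof.
apply: val_inj => /=.
by rewrite modnDm muln_modl -en mulnDl modn_mod.
Qed.

Lemma e0 : e 0%R = 0%R. Proof. by apply: ord_inj; rewrite e_val. Qed.

Lemma e_opp k : e (- k)%R = (- e k)%R.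
Proof. by apply/eqP; rewrite -subr_eq0 opprK -e_add addNr e0. Qed.

Lemma q_e k : q (e k) = 0%R.
Proof. by apply: ord_inj; rewrite q_val e_val modnMl. Qed.

Lemma qeq0 x : (q x == 0%R) = (M %| val x)%N.
Proof. by rewrite /dvdn -q_val; apply/eqP/eqP => [->|h]; last apply: ord_inj. Qed.

Lemma qeq0P x : reflect (exists k, x = e k) (q x == 0%R).
Proof.
apply: (iffP idP) => [|[k ->]]; last by rewrite q_e.
rewrite qeq0 => /dvdnP[k ek].
have kD : (k < Dd)%N by rewrite -(ltn_pmul2r (ltn0Sn m')) -ek -en ltn_ord.
by exists (Ordinal kD); apply: ord_inj; rewrite e_val ek.
Qed.

Lemma q_surj (a : ZM) : q (inZp (val a)) = a.
Proof.
apply: ord_inj; rewrite q_val /=.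
have aN : (a < N)%N by apply: (leq_trans (ltn_ord a)); rewrite en leq_pmull.
by rewrite (modn_small aN) modn_small.
Qed.

Lemma q_eq x y : q x = q y -> exists k, x = (y + e k)%R.
Proof.
move=> h; have : q (x - y)%R == 0%R by rewrite q_sub h subrr.
by case/qeq0P => k ek; exists k; rewrite -ek addrC subrK.
Qed.

Lemma card_fiber (a : ZM) : #|[set x : ZN | q x == a]| = Dd.
Proof.
set x0 : ZN := inZp (val a).
rewrite -[Dd]card_ord -(card_imset _ (f := fun k => (x0 + e k)%R)); last first.
  by move=> k l /addrI /e_inj.
apply: eq_card => x; rewrite inE; apply/eqP/imsetP => [h|[k _ ->]].
  have [k ek] : exists k, x = (x0 + e k)%R by apply: q_eq; rewrite q_surj.
  by exists k.
by rewrite q_add q_e addr0 q_surj.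
Qed.

Hypothesis dpos : (0 < d')%N.

Variable S : {set {set ZD}}.
Hypothesis schS : is_schur setT S.
Hypothesis primS : primitive setT S.

Definition Hn : {set ZN} := [set x | q x == 0%R].

Lemma embsetE (C : {set ZD}) : embset N C = e @: C.
Proof.
apply/setP => x; rewrite inE divNE; apply/existsP/imsetP => [[k /andP[kC /eqP ex]]|[k kC ->]].
  by exists k => //; apply: ord_inj; rewrite e_val; exact: ex.
by exists k; rewrite kC /=; apply/eqP; exact: (e_val k).
Qed.

Lemma embedE : embed N S = (fun C : {set ZD} => e @: C) @: S.
Proof.
by apply/setP => X; apply/imsetP/imsetP => -[C CS ->]; exists C; rewrite ?embsetE.
Qed.

Lemma HnE : Hn = e @: setT.
Proof.
apply/setP => x; rewrite inE; apply/idP/imsetP => [/qeq0P[k ->]|[k _ ->]].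
  by exists k.
by rewrite q_e.
Qed.

Lemma e_in_Hn k : e k \in Hn. Proof. by rewrite inE q_e. Qed.

Lemma mem_e (C : {set ZD}) k : (e k \in e @: C) = (k \in C).
Proof. by rewrite mem_imset //; apply: e_inj. Qed.

Lemma Hn_subgroup : is_subgroup Hn.
Proof.
apply/is_subgroupP; split=> [|x y|x]; rewrite !inE ?q0 //.
  by move=> /eqP hx /eqP hy; rewrite q_add hx hy addr0.
by move=> /eqP hx; rewrite q_opp hx oppr0.
Qed.

Lemma Hn_one : Hn != one_set N.
Proof.
have k1 : (1 < Dd)%N by rewrite ltnS.
apply/negP => /eqP h; have : e (Ordinal k1) \in Hn by apply: e_in_Hn.
rewrite h one_setE inE => /eqP.
rewrite -e0 => /e_inj /(congr1 (@nat_of_ord _)) //.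
Qed.

Lemma prim_transfer (X : {set ZN}) : is_subgroup X -> X \subset Hn ->
  (forall x, x \in X -> exists2 C0, C0 \in S & x \in e @: C0 /\ e @: C0 \subset X) ->
  X = one_set N \/ X = Hn.
Proof.
move=> gX XH hX.
have pS : partition S setT by case: schS.
set Y := e @^-1: X.
have gY : is_subgroup Y.
  move/is_subgroupP: gX => [a1 a2 a3]; apply/is_subgroupP; split=> [|x y|x];
    rewrite !inE ?e0 // ?e_add ?e_opp; [exact: a2 | exact: a3].
have uY : ucl S Y.
  move=> k C kY CS kC; move: kY; rewrite inE => /hX [C0 C0S [ekC0 C0X]].
  rewrite mem_e in ekC0; rewrite (class_uniq pS CS C0S kC ekC0).
  by apply/subsetP => j jC0; rewrite inE (subsetP C0X) // mem_e.
have [Y1|YT] := primS ((ssubP pS Y).2 (conj gY uY)).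
  left; apply/setP => x; rewrite one_setE inE; apply/idP/eqP => [xX|->].
    have := subsetP XH x xX; rewrite inE => /qeq0P[k ek].
    have : k \in Y by rewrite inE -ek.
    by rewrite Y1 one_setE inE => /eqP k0; rewrite ek k0 e0.
  by move/is_subgroupP: gX => [].
right; apply/setP => x; apply/idP/idP => [/(subsetP XH) //|].
rewrite inE => /qeq0P[k ->].
have : k \in Y by rewrite YT inE.
by rewrite inE.
Qed.


Definition pre (D : {set ZM}) : {set ZN} := q @^-1: D.

Lemma coef_pre (C' D' : {set ZM}) g :
  coef (pre C') (pre D') g = (Dd * coef C' D' (q g))%N.
Proof.
rewrite !coefE.
set Q := fun a : ZM => (a \in C') && ((q g - a)%R \in D').
transitivity #|[set x | Q (q x)]|.
  by apply: eq_card => x; rewrite !inE q_sub.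
rewrite -sum1_card (partition_big q Q); last by move=> x; rewrite inE.
rewrite (eq_bigr (fun _ => Dd)); last first.
  move=> a Qa; rewrite -(card_fiber a) -sum1_card; apply: eq_bigl => x.
  rewrite !inE; case: eqP => [->|]; by rewrite ?Qa ?andbF.
rewrite (eq_bigl (fun a => a \in [set a | Q a])); last by move=> a; rewrite inE.
by rewrite sum_nat_const mulnC.
Qed.

Lemma coef_emb (C0 D0 : {set ZD}) k : coef (e @: C0) (e @: D0) (e k) = coef C0 D0 k.
Proof.
rewrite !coefE -(card_imset _ e_inj); apply: eq_card => x; rewrite inE.
apply/andP/imsetP => [[/imsetP[j jC ->] xD]|[j]].
  exists j => //; rewrite inE jC /=.
  by rewrite -mem_e e_add e_opp.
rewrite inE => /andP[jC jD] ->; split; first by rewrite mem_e.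
by rewrite -e_opp -e_add mem_e.
Qed.

Lemma coef_emb_out (C0 D0 : {set ZD}) g : q g != 0%R -> coef (e @: C0) (e @: D0) g = 0%N.
Proof.
move=> qg; rewrite coefE; apply/eqP; rewrite cards_eq0; apply/eqP/setP => x.
rewrite !inE; apply/negP => /andP[/imsetP[j _ ->] /imsetP[l _ el]].
move: qg; have -> : g = (e j + e l)%R by rewrite -el addrC subrK.
by rewrite q_add !q_e addr0 eqxx.
Qed.

Lemma coef_emb_pre (C0 : {set ZD}) (D' : {set ZM}) g :
  coef (e @: C0) (pre D') g = if q g \in D' then #|C0| else 0%N.
Proof.
rewrite coefE; case: ifP => h.
  rewrite -(card_imset _ e_inj); apply: eq_card => x; rewrite !inE.
  case xC: (x \in e @: C0) => //=; case/imsetP: xC => j _ ->.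
  by rewrite q_sub q_e subr0 h.
apply/eqP; rewrite cards_eq0; apply/eqP/setP => x; rewrite !inE.
apply/negP => /andP[/imsetP[j _ ->]]; by rewrite q_sub q_e subr0 h.
Qed.

Section PhiT.
Variable T : {set {set ZM}}.
Hypothesis schT : is_schur setT T.

Definition Phi : {set {set ZN}} :=
  ((fun C : {set ZD} => e @: C) @: S) :|: (pre @: [set D in T | D != one_set M]).

Lemma PhiP X : X \in Phi <->
  (exists2 C0, C0 \in S & X = e @: C0) \/
  (exists2 C', (C' \in T) && (C' != one_set M) & X = pre C').
Proof.
rewrite inE; split=> [/orP[/imsetP[C0 C0S ->]|/imsetP[C' C'T ->]]|[[C0 C0S ->]|[C' C'T ->]]].
- by left; exists C0.
- by move: C'T; rewrite inE => C'T; right; exists C'.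
- by rewrite imset_f.
- by apply/orP; right; apply: imset_f; rewrite inE.
Qed.

Lemma pre_q0 C' x : C' \in T -> C' != one_set M -> x \in pre C' -> q x != 0%R.
Proof.
move=> C'T C'1; rewrite inE => xC; apply: contra C'1 => /eqP q0.
by apply/eqP; apply: zero_block schT C'T _; rewrite -q0.
Qed.

Lemma pre_n0 C' : C' \in T -> exists x, x \in pre C'.
Proof.
case: schT => pT _ _ _ _ C'T; case: (block_n0 pT C'T) => a aC.
by exists (inZp (val a)); rewrite inE q_surj.
Qed.

Lemma Phi_part : partition Phi setT.
Proof.
have pS : partition S setT by case: schS.
have pT : partition T setT by case: schT.
apply/partitionP; split.
- apply/negP => /PhiP[[C0 C0S e0]|[C' /andP[C'T _] e0]].
    case: (block_n0 pS C0S) => k kC; have : e k \in e @: C0 by rewrite mem_e.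
    by rewrite -e0 inE.
  by case: (pre_n0 C'T) => x; rewrite -e0 inE.
- move=> x; have [/qeq0P[k ->]|qx] := boolP (q x == 0%R).
    case: (class_of pS k) => C0 C0S kC; exists (e @: C0); last by rewrite mem_e.
    by apply/PhiP; left; exists C0.
  case: (class_of pT (q x)) => C' C'T xC; exists (pre C'); last by rewrite inE.
  apply/PhiP; right; exists C' => //; rewrite C'T /=.
  by apply: contra qx => /eqP C'1; move: xC; rewrite C'1 one_setE inE.
- move=> B B' x /PhiP[[C0 C0S ->]|[C' /andP[C'T C'1] ->]] /PhiP[[D0 D0S ->]|[D' /andP[D'T D'1] ->]].
  + by move=> /imsetP[k kC ->]; rewrite mem_e => kD; rewrite (class_uniq pS C0S D0S kC kD).
  + by move=> /imsetP[k kC ->] /(pre_q0 D'T D'1); rewrite q_e eqxx.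
  + by move=> /(pre_q0 C'T C'1) qx /imsetP[k kC ekx]; rewrite ekx q_e eqxx in qx.
  + by rewrite !inE => xC xD; rewrite (class_uniq pT C'T D'T xC xD).
Qed.


Lemma inv_emb (C0 : {set ZD}) : inv_set (e @: C0) = e @: inv_set C0.
Proof.
apply/setP => x; rewrite inv_setE inE; apply/imsetP/imsetP => [[k kC ex]|[k]].
  exists (- k)%R; first by rewrite inv_setE inE opprK.
  by rewrite e_opp -ex opprK.
rewrite inv_setE inE => kC ->; exists (- k)%R => //.
by rewrite e_opp.
Qed.

Lemma inv_pre (C' : {set ZM}) : inv_set (pre C') = pre (inv_set C').
Proof. by apply/setP => x; rewrite !inv_setE !inE ?inv_setE ?inE q_opp. Qed.

Lemma Phi_elem E g h : E \in Phi -> g \in E -> h \in E ->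
  (exists E0 g0 h0, [/\ E0 \in S, g = e g0, h = e h0, g0 \in E0 & h0 \in E0]) \/
  (exists2 E', E' \in T & [/\ q g \in E', q h \in E', q g != 0%R & q h != 0%R]).
Proof.
move=> /PhiP[[E0 E0S ->]|[E' /andP[E'T E'1] ->]].
  move=> /imsetP[g0 g0E ->] /imsetP[h0 h0E ->]; left.
  by exists E0, g0, h0.
move=> gE hE; right; exists E' => //; split.
- by move: gE; rewrite inE.
- by move: hE; rewrite inE.
- exact: pre_q0 gE.
- exact: pre_q0 hE.
Qed.

Lemma Phi_schur : is_schur setT Phi.
Proof.
have pT : partition T setT by case: schT.
have [_ oS iS _ cS] := schS.
have [_ oT iT _ cT] := schT.
split.
- exact: Phi_part.
- apply/PhiP; left; exists (one_set Dd) => //.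
  by rewrite !one_setE imset_set1 e0.
- move=> X /PhiP[[C0 C0S ->]|[C' /andP[C'T C'1] ->]].
    by apply/PhiP; left; exists (inv_set C0); rewrite ?inv_emb ?iS.
  apply/PhiP; right; exists (inv_set C'); rewrite ?inv_pre // iT //=.
  by apply: contra C'1 => /eqP h; rewrite -[C']inv_setK h inv_one.
- by move=> C D g _ _; rewrite inE.
have key : forall C D E g h, C \in Phi -> D \in Phi -> E \in Phi -> g \in E -> h \in E ->
    (exists C0 : {set ZD}, C = e @: C0 /\ C0 \in S) -> coef C D g = coef C D h.
  move=> C D E g h CP DP EP gE hE [C0 [-> C0S]].
  case/PhiP: DP => [[D0 D0S ->]|[D' /andP[D'T D'1] ->]].
    case: (Phi_elem EP gE hE) => [[E0 [g0 [h0 [E0S -> -> gE0 hE0]]]]|[E' E'T [_ _ qg qh]]].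
      by rewrite !coef_emb (cS C0 D0 E0 g0 h0).
    by rewrite !coef_emb_out.
  rewrite !coef_emb_pre.
  case: (Phi_elem EP gE hE) => [[E0 [g0 [h0 [E0S -> -> gE0 hE0]]]]|[E' E'T [gE' hE' _ _]]].
    by rewrite !q_e.
  by rewrite (same_block pT D'T E'T gE' hE').
move=> C D E g h CP DP EP gE hE.
case/PhiP: (CP) => [[C0 C0S eC]|[C' /andP[C'T C'1] eC]].
  by apply: (key C D E) => //; exists C0.
case/PhiP: (DP) => [[D0 D0S eD]|[D' /andP[D'T D'1] eD]].
  by rewrite coefC [in RHS]coefC; apply: (key D C E) => //; exists D0.
rewrite eC eD !coef_pre.
case: (Phi_elem EP gE hE) => [[E0 [g0 [h0 [E0S -> -> gE0 hE0]]]]|[E' E'T [gE' hE' _ _]]].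
  by rewrite !q_e.
by rewrite (cT C' D' E' (q g) (q h)).
Qed.


Lemma Phi_restr : restr Phi Hn = (fun C : {set ZD} => e @: C) @: S.
Proof.
apply/setP => X; rewrite inE; apply/andP/imsetP => [[/PhiP[[C0 C0S ->]|[C' /andP[C'T C'1] ->]] XH]|[C0 C0S ->]].
- by exists C0.
- case: (pre_n0 C'T) => x xC; have := pre_q0 C'T C'1 xC.
  by have := subsetP XH x xC; rewrite inE => ->.
split; first by apply/PhiP; left; exists C0.
by apply/subsetP => x /imsetP[k _ ->]; apply: e_in_Hn.
Qed.

Lemma Phi_uclHn : ucl Phi Hn.
Proof.
move=> x X xH /PhiP[[C0 C0S ->]|[C' /andP[C'T C'1] ->]] xX.
  by apply/subsetP => y /imsetP[k _ ->]; apply: e_in_Hn.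
by have := pre_q0 C'T C'1 xX; move: xH; rewrite inE => ->.
Qed.

Lemma Hn_pre_cosets C' : union_cosets Hn (pre C').
Proof.
apply/union_cosetsP => x y; rewrite !inE => xC /eqP qy.
by rewrite q_add qy addr0.
Qed.

End PhiT.

Lemma primH_gen (P : {set {set ZN}}) X : partition P setT ->
  (forall C0, C0 \in S -> e @: C0 \in P) ->
  is_subgroup X -> X \subset Hn -> ucl P X -> X = one_set N \/ X = Hn.
Proof.
move=> pP eP gX XH uX; apply: prim_transfer => // x xX.
have pS : partition S setT by case: schS.
have := subsetP XH x xX; rewrite inE => /qeq0P[k ek].
case: (class_of pS k) => C0 C0S kC; exists C0 => //; split; first by rewrite ek mem_e.
apply: (uX x) => //; first exact: eP.
by rewrite ek mem_e.
Qed.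

Section PhiCore.
Variable T : {set {set ZM}}.
Hypothesis schT : is_schur setT T.

Lemma Phi_core : wedge_core_grp (Phi T) Hn.
Proof.
have pP := Phi_part schT.
have sH : s_subgroup (Phi T) Hn by apply/(ssubP pP); split; [apply: Hn_subgroup|apply: (Phi_uclHn schT)].
have eP : forall C0, C0 \in S -> e @: C0 \in Phi T by move=> C0 C0S; apply/PhiP; left; exists C0.
split.
  split=> //.
    move=> [K [L [[sK sL K1 KL LH] _]]].
    move/(ssub_restrP pP): sK => [gK uK KH].
    move/(ssub_restrP pP): sL => [gL uL LH'].
    have [K0|KH'] := primH_gen pP eP gK KH uK; first by rewrite K0 eqxx in K1.
    by move: LH; rewrite eqEsubset LH' -KH' KL.
  split=> [C|C CP]; first by rewrite inE => /andP[CP _]; apply: in_span_self.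
  case/PhiP: (CP) => [[C0 C0S eC]|[C' /andP[C'T C'1] eC]].
    by apply: in_span_self; rewrite (Phi_restr schT) eC imset_f.
  rewrite eC (omega_union_cosets Hn_subgroup Hn_one (Hn_pre_cosets (C' := C'))).
  exact: in_span_0.
move=> H' [sH' nw _]; apply/subsetP => x xH'; apply/negPn/negP => xn.
case/(ssubP pP): sH' => gH' uH'.
case: (class_of pP x) => X XP xX.
have XH' := uH' x X xH' XP xX.
case/PhiP: (XP) => [[C0 C0S eX]|[C' /andP[C'T C'1] eX]].
  by move: xX; rewrite eX => /imsetP[k _ ek]; rewrite ek e_in_Hn in xn.
have HH' : Hn \subset H'.
  apply: (sub_of_shift (h := x)) => // y yH.
  apply: (subsetP XH'); rewrite eX.
  have /union_cosetsP := Hn_pre_cosets (C' := C'); apply => //.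
  by rewrite -eX.
apply: nw; exists Hn, Hn; split; last first.
  move=> C; rewrite inE => /andP[/PhiP[[C0 C0S ->]|[D' /andP[D'T D'1] ->]] _].
    by left; apply/subsetP => y /imsetP[k _ ->]; apply: e_in_Hn.
  by right; apply: Hn_pre_cosets.
have sHr : s_subgroup (restr (Phi T) H') Hn.
  by apply/(ssub_restrP pP); split=> //; [apply: Hn_subgroup|apply: (Phi_uclHn schT)].
split=> //; first exact: Hn_one.
by apply: contra xn => /eqP ->.
Qed.

End PhiCore.




Lemma q_emb C0 : C0 \in S -> q @: (e @: C0) = one_set M.
Proof.
have pS : partition S setT by case: schS.
move=> C0S; case: (block_n0 pS C0S) => k kC.
apply/setP => a; rewrite one_setE inE; apply/imsetP/eqP => [[x /imsetP[j _ ->] ->]|->].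
  by rewrite q_e.
by exists (e k); rewrite ?mem_e ?q_e.
Qed.

Section Good.
Variables (P : {set {set ZN}}) (H : {set ZN}).
Hypothesis schP : is_schur setT P.
Hypothesis wc : wedge_core_grp P H.
Hypothesis rH : restr P H = embed N S.

Let pP : partition P setT. Proof. by case: schP. Qed.
Let pS : partition S setT. Proof. by case: schS. Qed.

Lemma restrE : restr P H = (fun C : {set ZD} => e @: C) @: S.
Proof. by rewrite rH embedE. Qed.

Lemma eP C0 : C0 \in S -> e @: C0 \in P.
Proof.
move=> C0S; have : e @: C0 \in restr P H by rewrite restrE imset_f.
by rewrite inE => /andP[].
Qed.

Lemma H_eq : H = Hn.
Proof.
have [[sH _ _] _] := wc.
case/(ssubP pP): sH => _ uH.
apply/setP => x; apply/idP/idP => [xH|].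
  case: (class_of pP x) => C CP xC.
  have : C \in restr P H by rewrite inE CP (uH x C).
  by rewrite restrE => /imsetP[C0 _ eC]; move: xC; rewrite eC => /imsetP[k _ ->]; apply: e_in_Hn.
rewrite inE => /qeq0P[k ->].
case: (class_of pS k) => C0 C0S kC.
have : e @: C0 \in restr P H by rewrite restrE imset_f.
by rewrite inE => /andP[_ /subsetP]; apply; rewrite mem_e.
Qed.

Lemma good_cosets C : C \in P -> ~~ (C \subset Hn) -> union_cosets Hn C.
Proof.
have [[sH _ _] mx] := wc.
rewrite H_eq in sH mx.
move=> CP CH; apply: (hard_main pP sH Hn_one _ mx CP CH).
move=> X gX XH uX; exact: primH_gen pP eP gX XH uX.
Qed.

Lemma uclH : ucl P Hn.
Proof. by have [[sH _ _] _] := wc; rewrite H_eq in sH; case/(ssubP pP): sH. Qed.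

Lemma P_classes C : C \in P ->
  (exists2 C0, C0 \in S & C = e @: C0) \/
  [/\ C = pre (q @: C), q @: C != one_set M & forall x, x \in C -> q x != 0%R].
Proof.
move=> CP; have [CH|CH] := boolP (C \subset Hn).
  left; have : C \in restr P H by rewrite inE CP H_eq CH.
  by rewrite restrE => /imsetP[C0 C0S ->]; exists C0.
have nz : forall x, x \in C -> q x != 0%R.
  move=> x xC; apply/negP => qx; move/negP: CH; apply; apply: (uclH _ CP xC).
  by rewrite inE.
right; split => //.
- apply/setP => y; rewrite inE; apply/idP/imsetP => [yC|[x xC qyx]].
    by exists y.
  case: (q_eq qyx) => k ->; have /union_cosetsP := good_cosets CP CH; apply => //.
  exact: e_in_Hn.
- case: (block_n0 pP CP) => x xC; apply/negP => /eqP h.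
  have : q x \in q @: C by rewrite imset_f.
  by rewrite h one_setE inE (negbTE (nz x xC)).
Qed.


Definition Psi : {set {set ZM}} := (fun C : {set ZN} => q @: C) @: P.

Lemma q_one : q @: one_set N = one_set M.
Proof. by rewrite !one_setE imset_set1 q0. Qed.

Lemma Psi_part : partition Psi setT.
Proof.
apply/partitionP; split.
- apply/negP => /imsetP[C CP e0]; case: (block_n0 pP CP) => x xC.
  have : q x \in q @: C by rewrite imset_f.
  by rewrite -e0 inE.
- move=> a; case: (class_of pP (inZp (val a))) => C CP xC.
  by exists (q @: C); [rewrite imset_f | rewrite -(q_surj a) imset_f].
- move=> B B' a /imsetP[C CP ->] /imsetP[D DP ->] /imsetP[x xC ->] /imsetP[y yD qxy].
  case: (P_classes CP) => [[C0 C0S eC]|[eC _ nzC]];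
  case: (P_classes DP) => [[D0 D0S eD]|[eD _ nzD]].
  + by rewrite eC eD !q_emb.
  + by move: (nzD y yD); rewrite -qxy eC in xC *; case/imsetP: xC => k _ ->; rewrite q_e eqxx.
  + by move: (nzC x xC); rewrite qxy eD in yD *; case/imsetP: yD => k _ ->; rewrite q_e eqxx.
  + have yC : y \in C by rewrite eC inE -qxy imset_f.
    by rewrite (class_uniq pP CP DP yC yD).
Qed.

Lemma Psi_eq : Phi Psi = P.
Proof.
apply/setP => X; apply/idP/idP => [/PhiP[[C0 C0S ->]|[C' /andP[/imsetP[C CP ->] C'1] ->]]|XP].
- exact: eP.
- case: (P_classes CP) => [[C0 C0S eC]|[eC _ _]]; last by rewrite -eC.
  by rewrite eC q_emb // eqxx in C'1.
apply/PhiP; case: (P_classes XP) => [[C0 C0S ->]|[eX X1 _]]; first by left; exists C0.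
by right; exists (q @: X) => //; rewrite imset_f.
Qed.

Lemma Psi_inv (C : {set ZN}) : inv_set (q @: C) = q @: inv_set C.
Proof.
apply/setP => a; rewrite inv_setE inE; apply/imsetP/imsetP => [[x xC ea]|[y]].
  exists (- x)%R; first by rewrite inv_setE inE opprK.
  by rewrite q_opp -ea opprK.
rewrite inv_setE inE => yC ->; exists (- y)%R => //.
by rewrite q_opp.
Qed.

Lemma Psi_schur : is_schur setT Psi.
Proof.
have [_ oP iP _ cP] := schP.
have pPs := Psi_part.
split=> //.
- by rewrite -q_one imset_f.
- by move=> X /imsetP[C CP ->]; rewrite Psi_inv imset_f ?iP.
- by move=> C D g _ _; rewrite inE.
have key : forall C D E g h, C \in P -> D \in Psi -> E \in Psi -> g \in E -> h \in E ->
    (exists2 C0, C0 \in S & C = e @: C0) -> coef (q @: C) D g = coef (q @: C) D h.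
  move=> C D E g h CP DPs EPs gE hE [C0 C0S eC].
  by rewrite eC q_emb // !coef_one (same_block pPs DPs EPs gE hE).
move=> C' D' E' g' h' /imsetP[C CP ->] /imsetP[D DP ->] EPs gE hE.
case: (P_classes CP) => [hC|[eC _ _]]; first by apply: (key C _ E') => //; apply: imset_f.
case: (P_classes DP) => [hD|[eD _ _]].
  by rewrite coefC [in RHS]coefC; apply: (key D _ E') => //; apply: imset_f.
move: EPs gE hE => /imsetP[E EP ->] /imsetP[g gE ->] /imsetP[h hE ->].
have := cP C D E g h CP DP EP gE hE.
by rewrite eC eD !coef_pre -!eC -!eD => /eqP; rewrite eqn_mul2l /= => /eqP.
Qed.

End Good.


Lemma q_pre (C' : {set ZM}) : q @: pre C' = C'.
Proof.
apply/setP => a; apply/imsetP/idP => [[x] |aC]; first by rewrite inE => xC ->.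
by exists (inZp (val a)); rewrite ?inE q_surj.
Qed.

Lemma Psi_Phi T : is_schur setT T -> Psi (Phi T) = T.
Proof.
move=> schT; have [_ oS _ _ _] := schS; have [_ oT _ _ _] := schT.
apply/setP => X; apply/imsetP/idP => [[C /PhiP[[C0 C0S ->]|[C' /andP[C'T _] ->]] ->]|XT].
- by rewrite q_emb.
- by rewrite q_pre.
have [X1|X1] := eqVneq X (one_set M).
  exists (e @: one_set Dd); last by rewrite q_emb.
  by apply/PhiP; left; exists (one_set Dd).
exists (pre X); last by rewrite q_pre.
by apply/PhiP; right; exists X; rewrite ?XT.
Qed.

Lemma count : Omega_core N S = Omega M.
Proof.
rewrite /Omega_core /Omega.
set A := [set T : {set {set ZM}} | pb (is_schur setT T)].
have -> : [set P : {set {set ZN}} | pb (is_schur setT P /\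
      exists H, wedge_core_grp P H /\ restr P H = embed N S)] = Phi @: A.
  apply/setP => P; rewrite inE; apply/pbP/imsetP => [[schP [H [wc rH]]]|[T]].
    exists (Psi P); last by rewrite (Psi_eq schP wc rH).
    by rewrite inE; apply/pbP; apply: (Psi_schur schP wc rH).
  rewrite inE => /pbP schT ->; split; first exact: Phi_schur.
  exists Hn; split; first exact: Phi_core.
  by rewrite Phi_restr // embedE.
rewrite card_in_imset // => T1 T2; rewrite !inE => /pbP s1 /pbP s2 e12.
by rewrite -(Psi_Phi s1) e12 Psi_Phi.
Qed.

End Quot.

Theorem lemma3p1 (n d : nat) (S : {set {set 'I_d}}) :
  (0 < n)%N -> (1 < d)%N -> (d %| n)%N ->
  is_schur [set: 'I_d] S -> primitive [set: 'I_d] S ->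
  Omega_core n S = Omega (n %/ d).
Proof.
case: n => // n' _; case: d S => // d' S d1 dvd schS primS.
have dpos : (0 < d')%N by [].
have mpos : (0 < n'.+1 %/ d'.+1)%N by rewrite divn_gt0 // dvdn_leq.
case Em: (n'.+1 %/ d'.+1) mpos => [|m'] // _.
have en : n'.+1 = (d'.+1 * m'.+1)%N by rewrite -Em mulnC divnK.
exact: (count en dpos schS primS).
Qed.
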